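(* For all positive integers $n,k$ and every $\boldsymbol\rho=(\rho_1,\dots,\rho_k)$ of integers with $1\le\rho_\ell\le n\le k$ for all $\ell\in[k]$ and $\sum_{\ell\in[k]}\rho_\ell=n^2$, there exists a $\boldsymbol\rho$-latin square of order $n$.
   Context: A $\boldsymbol\rho$-latin square of order $n$ is an $n\times n$ array in which every cell contains a symbol of $[k]$, each symbol occurs at most once in each row and at most once in each column, and each symbol $\ell$ occurs exactly $\rho_\ell$ times. *)

(* Defs.v *)
From mathcomp Require Import all_boot.
Set Implicit Arguments. Unset Strict Implicit. Unset Printing Implicit Defensive.

Definition rho_latin_square (n k : nat) (rho : 'I_k -> nat)
    (L : 'I_n -> 'I_n -> 'I_k) : Prop :=
  [/\ (forall i, injective (L i)),
      (forall j, injective (fun i => L i j)) &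
      (forall l : 'I_k, #|[set p : 'I_n * 'I_n | L p.1 p.2 == l]| = rho l)].

(* Main.v *)
Require Import Defs.
From mathcomp Require Import all_boot zify.

Lemma arith_col n d1 d2 i1 i2 j s r c : i1<n -> i2<n -> d1<n -> d2<n -> j<n ->
  (i1+d1 = j \/ i1+d1 = j+n) -> (i2+d2=j \/ i2+d2 = j+n) ->
  s <= d1*n+i1 < s+r -> s <= d2*n+i2 < s+r -> r <= n -> (r < n \/ s = c*n) -> i1 = i2.
Proof.
wlog: d1 d2 i1 i2 / d1 <= d2.
  move=> W *; case: (leqP d1 d2) => h; first by apply: (W d1 d2).
  symmetry; apply: (W d2 d1) => //; exact: ltnW.
move=> hle hi1 hi2 hd1 hd2 hj H1 H2 T1 T2 hr hc.
have [heq|hlt] := eqVneq d1 d2.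
  subst; lia.
have hlt': d1 < d2 by lia.
have [e|hlt2] := eqVneq d2 d1.+1.
  subst d2; rewrite mulSnr in T2.
  case: hc => hc; first lia.
  have hn: 0 < n by lia.
  have hc1: c * n < d1.+1 * n by rewrite mulSnr; lia.
  rewrite ltn_pmul2r // in hc1.
  have hc2: c * n <= d1 * n by rewrite leq_mul2r; lia.
  lia.
have h1: d1.+2 * n <= d2 * n by rewrite leq_mul2r; lia.
rewrite !mulSnr in h1. lia.
Qed.
Lemma arith_row n d1 d2 i s r : i<n ->
  s <= d1*n+i < s+r -> s <= d2*n+i < s+r -> r <= n -> d1 = d2.
Proof.
move=> hi T1 T2 hr.
have [h|h|//] := ltngtP d1 d2.
  have : d1.+1 * n <= d2 * n by rewrite leq_mul2r h orbT.
  rewrite mulSnr; lia.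
have : d2.+1 * n <= d1 * n by rewrite leq_mul2r h orbT.
rewrite mulSnr; lia.
Qed.
Set Implicit Arguments. Unset Strict Implicit.

Definition keyf (n k : nat) (rho : 'I_k -> nat) (l : 'I_k) : nat :=
  (if rho l == n then 0 else k) + l.
Definition startf (n k : nat) (rho : 'I_k -> nat) (l : 'I_k) : nat :=
  \sum_(l' < k | keyf n rho l' < keyf n rho l) rho l'.

Lemma key_inj n k (rho : 'I_k -> nat) : injective (keyf n rho).
Proof.
move=> l1 l2; rewrite /keyf => h; apply: val_inj => /=.
have := ltn_ord l1; have := ltn_ord l2.
by move: h; case: ifP; case: ifP => _ _; lia.
Qed.

Lemma start_le n k (rho : 'I_k -> nat) (P : pred 'I_k) l1 :
  P l1 -> (forall l, keyf n rho l < keyf n rho l1 -> P l) ->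
  startf n rho l1 + rho l1 <= \sum_(l < k | P l) rho l.
Proof.
move=> Pl1 HP.
rewrite (bigID (fun l => keyf n rho l < keyf n rho l1)) /= /startf.
have -> : \sum_(i < k | P i && (keyf n rho i < keyf n rho l1)) rho i =
          \sum_(i < k | keyf n rho i < keyf n rho l1) rho i.
  apply: eq_bigl => i; case h: (_ < _); rewrite ?andbT ?andbF //; exact: HP.
rewrite leq_add2l (bigD1 l1) /=; last by rewrite Pl1 ltnn.
exact: leq_addr.
Qed.

Lemma start_disj n k (rho : 'I_k -> nat) l1 l2 :
  keyf n rho l1 < keyf n rho l2 -> startf n rho l1 + rho l1 <= startf n rho l2.
Proof.
move=> h; apply: start_le => // l hl; exact: ltn_trans hl h.
Qed.

Lemma start_tot n k (rho : 'I_k -> nat) l :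
  startf n rho l + rho l <= \sum_(l' < k) rho l'.
Proof. exact: start_le. Qed.

Lemma start_full n k (rho : 'I_k -> nat) l : rho l = n -> exists c, startf n rho l = c * n.
Proof.
move=> hl; exists #|[pred l' | keyf n rho l' < keyf n rho l]|.
rewrite /startf -sum_nat_const; apply: eq_bigr => l' hl'.
move: hl'; rewrite /keyf hl eqxx add0n.
have := ltn_ord l; have := ltn_ord l'.
by case: ifP => [/eqP //|]; lia.
Qed.

Lemma uniq_int n k (rho : 'I_k -> nat) l1 l2 t :
  startf n rho l1 <= t < startf n rho l1 + rho l1 ->
  startf n rho l2 <= t < startf n rho l2 + rho l2 -> l1 = l2.
Proof.
move=> h1 h2.
have [h|h|h] := ltngtP (keyf n rho l1) (keyf n rho l2).
- have := start_disj h; lia.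
- have := start_disj h; lia.
- exact: key_inj h.
Qed.

Lemma sum_interval N a b : \sum_(t < N) (a <= t < b) = minn b N - minn a N.
Proof.
elim: N => [|N IH]; first by rewrite big_ord0; lia.
rewrite big_ord_recr /= IH.
case: (leqP a N) => h1; case: (ltnP N b) => h2 /=; lia.
Qed.

Lemma sum_pairs0 m n (F : nat -> nat) :
  \sum_(d < m) \sum_(i < n) F (d * n + i) = \sum_(t < m * n) F t.
Proof.
elim: m => [|m IH]; first by rewrite !big_ord0.
by rewrite big_ord_recr /= IH mulSnr big_split_ord.
Qed.

Lemma sum_pairs n (F : nat -> nat) :
  \sum_(q : 'I_n * 'I_n) F (q.1 * n + q.2) = \sum_(t < n * n) F t.
Proof.
by rewrite -(pair_big xpredT xpredT (fun d i : 'I_n => F (d * n + i))) /= sum_pairs0.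
Qed.

Lemma sum_le1 k (P : pred 'I_k) : (forall l1 l2, P l1 -> P l2 -> l1 = l2) ->
  \sum_(l < k) P l <= 1.
Proof.
move=> hu; case: (pickP P) => [l Pl|none].
  rewrite (bigD1 l) //= Pl big1 // => l' hl'.
  by case h: (P l') => //; move: hl'; rewrite (hu _ _ h Pl) eqxx.
by rewrite big1 // => l _; rewrite none.
Qed.

Definition inI (n k : nat) (rho : 'I_k -> nat) (t : nat) (l : 'I_k) : bool :=
  startf n rho l <= t < startf n rho l + rho l.

Lemma cover n k (rho : 'I_k -> nat) N t :
  \sum_(l < k) rho l = N -> t < N -> exists l, inI n rho t l.
Proof.
move=> hs ht.
have tot: \sum_(t' < N) \sum_(l < k) inI n rho t' l = N.
  rewrite exchange_big /= -[RHS]hs; apply: eq_bigr => l _.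
  rewrite /inI sum_interval; have := start_tot n rho l; rewrite hs; lia.
case: (pickP (inI n rho t)) => [l hl|none]; first by exists l.
exfalso.
have le1: forall t' : 'I_N, \sum_(l < k) inI n rho t' l <= 1.
  move=> t'; apply: sum_le1 => l1 l2; exact: uniq_int.
move: tot; rewrite (bigD1 (Ordinal ht)) //= big1; last by move=> l _; rewrite none.
have: \sum_(t' < N | t' != Ordinal ht) \sum_(l < k) inI n rho t' l
        <= \sum_(t' < N | t' != Ordinal ht) 1 by apply: leq_sum => t' _; exact: le1.
rewrite sum1_card cardC1 card_ord => h1; rewrite add0n => h2; move: h1; rewrite h2; lia.
Qed.

Definition dd (n i j : nat) := if i <= j then j - i else j + n - i.
Definition jjn (n d i : nat) := if i + d < n then i + d else i + d - n.
Lemma jj_lt n (d i : 'I_n) : jjn n d i < n.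
Proof. rewrite /jjn; have := ltn_ord d; have := ltn_ord i; case: ifP; lia. Qed.
Definition phi n (q : 'I_n * 'I_n) : 'I_n * 'I_n := (q.2, Ordinal (jj_lt q.1 q.2)).
Lemma phi_inj n : injective (@phi n).
Proof.
move=> [d1 i1] [d2 i2] [e1 e2]; subst i2; congr pair; apply: val_inj => /=.
move: e2; rewrite /jjn; have := ltn_ord d1; have := ltn_ord d2; have := ltn_ord i1.
case: ifP; case: ifP; lia.
Qed.
Lemma dd_phi n (d i : 'I_n) : dd n i (jjn n d i) = d.
Proof. rewrite /dd /jjn; have := ltn_ord d; have := ltn_ord i; case: ifP; case: ifP; lia. Qed.
Lemma dd_lt n (i j : 'I_n) : dd n i j < n.
Proof. rewrite /dd; have := ltn_ord j; have := ltn_ord i; case: ifP; lia. Qed.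
Lemma dd_rel n (i j : 'I_n) : i + dd n i j = j \/ i + dd n i j = j + n.
Proof. rewrite /dd; have := ltn_ord j; have := ltn_ord i; case: ifP; lia. Qed.

Theorem theorem2p2 (n k : nat) (rho : 'I_k -> nat) :
  0 < n -> 0 < k -> n <= k ->
  (forall l : 'I_k, 1 <= rho l <= n) ->
  \sum_(l < k) rho l = n ^ 2 ->
  exists L : 'I_n -> 'I_n -> 'I_k, rho_latin_square rho L.
Proof.
move=> hn hk hnk hr hs; rewrite -mulnn in hs.
pose l0 : 'I_k := Ordinal hk.
pose sym t := odflt l0 [pick l | inI n rho t l].
have symP : forall t, t < n * n -> inI n rho t (sym t).
  move=> t ht; rewrite /sym; case: pickP => [l //|none].
  by have [l hl] := @cover n _ rho _ _ hs ht; rewrite none in hl.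
have symE : forall t l, t < n * n -> (sym t == l) = inI n rho t l.
  move=> t l ht; apply/eqP/idP => [<-|h]; first exact: symP.
  exact: (uniq_int (symP t ht) h).
have idx : forall i j : 'I_n, dd n i j * n + i < n * n.
  move=> i j; have := dd_lt i j; have := ltn_ord i => h1 h2.
  have : (dd n i j).+1 * n <= n * n by rewrite leq_mul2r h2 orbT.
  rewrite mulSnr; lia.
exists (fun i j => sym (dd n i j * n + i)); split.
- move=> i j1 j2 /= e; apply: val_inj => /=.
  set l := sym (dd n i j1 * n + i) in e.
  have h1 := symP _ (idx i j1); have h2 := symP _ (idx i j2).
  rewrite -/l -e in h2; rewrite -/l in h1.
  have := arith_row n _ _ _ _ _ (ltn_ord i) h1 h2 (proj2 (andP (hr l))).
  move: (dd_rel i j1) (dd_rel i j2); have := ltn_ord j1; have := ltn_ord j2; lia.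
- move=> j i1 i2 /= e; apply: val_inj => /=.
  set l := sym (dd n i1 j * n + i1) in e.
  have h1 := symP _ (idx i1 j); have h2 := symP _ (idx i2 j).
  rewrite -/l -e in h2; rewrite -/l in h1.
  have hrl := proj2 (andP (hr l)).
  have [c hc] : exists c, rho l < n \/ startf n rho l = c * n.
    case: (ltngtP (rho l) n) => h; first by exists 0; left.
      lia.
    by have [c hc] := start_full h; exists c; right.
  exact: (arith_col n _ _ _ _ _ _ _ c (ltn_ord i1) (ltn_ord i2) (dd_lt i1 j) (dd_lt i2 j) (ltn_ord j)
            (dd_rel i1 j) (dd_rel i2 j) h1 h2 hrl hc).
- move=> l.
  rewrite -sum1_card big_mkcond /=.
  rewrite (reindex_inj (@phi_inj n)) /=.
  transitivity (\sum_(q : 'I_n * 'I_n) inI n rho (q.1 * n + q.2) l).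
    apply: eq_bigr => [[d i]] _ /=; rewrite inE /= dd_phi symE.
      by case: (inI _ _ _ _).
    have := ltn_ord d; have := ltn_ord i => h1 h2.
    have : d.+1 * n <= n * n by rewrite leq_mul2r h2 orbT.
    rewrite mulSnr; lia.
  rewrite (sum_pairs n (fun t => inI n rho t l)) /inI sum_interval.
  have := start_tot n rho l; rewrite hs; lia.
Qed.
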